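(* Let $\mathrm{R}$ be a real closed field, $\mathrm{C}=\mathrm{R}[i]$, let $F/G\in\mathrm{C}(Z)\setminus\{0\}$, $\gamma\in\mathrm{C}\setminus\{0\}$ and let $\Gamma=[x_0,x_1]\times[y_0,y_1]\subset\mathrm{R}^2$ with $x_0<x_1$, $y_0<y_1$. Then $\mathrm{W}(F/G\mid\partial\Gamma)=\mathrm{W}(\gamma F/G\mid\partial\Gamma)$.
   Context: For nonzero $P\in\mathrm{R}[X]$ and $x\in\mathrm{R}$ write uniquely $P=(X-x)^{\mathrm{mult}_x(P)}P_x$ with $P_x(x)\neq0$; for $P,Q\neq0$ set $\mathrm{val}_x(P/Q)=\mathrm{mult}_x(P)-\mathrm{mult}_x(Q)$. For $P,Q\in\mathrm{R}[X]$, $x\in\mathrm{R}$: $\mathrm{Ind}^+_x(P,Q)=\tfrac12\,\mathrm{sign}(P_x(x)Q_x(x))$ and $\mathrm{Ind}^-_x(P,Q)=\tfrac12(-1)^{\mathrm{val}_x(P/Q)}\mathrm{sign}(P_x(x)Q_x(x))$ if $P\ne0$, $Q\neq0$ and $\mathrm{val}_x(P/Q)<0$, and both are $0$ otherwise; $\mathrm{Ind}_x=\mathrm{Ind}^+_x-\mathrm{Ind}^-_x$. For $a<b$, $\mathrm{Ind}_a^b(P,Q)=\mathrm{Ind}_a^+(P,Q)+\sum_{x\in(a,b)}\mathrm{Ind}_x(P,Q)-\mathrm{Ind}_b^-(P,Q)$; $\mathrm{Ind}_a^b=-\mathrm{Ind}_b^a$ if $b<a$, and $\mathrm{Ind}_a^a=0$.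 For $F\in\mathrm{C}[X,Y]$ let $F_{\rm re},F_{\rm im}\in\mathrm{R}[X,Y]$ with $F=F_{\rm re}+iF_{\rm im}$, and $\overline F=F_{\rm re}-iF_{\rm im}$. Define $\mathrm{w}(F\mid\partial\Gamma)=\tfrac12\big(\mathrm{Ind}_{x_0}^{x_1}(F_{\rm re}(T,y_0),F_{\rm im}(T,y_0))+\mathrm{Ind}_{y_0}^{y_1}(F_{\rm re}(x_1,T),F_{\rm im}(x_1,T))+\mathrm{Ind}_{x_1}^{x_0}(F_{\rm re}(T,y_1),F_{\rm im}(T,y_1))+\mathrm{Ind}_{y_1}^{y_0}(F_{\rm re}(x_0,T),F_{\rm im}(x_0,T))\big)$ and $\mathrm{W}(F\mid\partial\Gamma)=\tfrac12\big(\mathrm{w}(F\mid\partial\Gamma)+\mathrm{w}(iF\mid\partial\Gamma)\big)$. $\mathrm{C}[Z]\subset\mathrm{C}[X,Y]$ via $Z=X+iY$. For $F,G\in\mathrm{C}[X,Y]$, $G\neq0$, $\mathrm{W}(F/G\mid\partial\Gamma):=\mathrm{W}(F\overline G\mid\partial\Gamma)$ (independent of the representation). *)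

(* Defs.v *)
From HB Require Import structures.
From mathcomp Require Import all_boot all_order all_algebra.
From mathcomp Require Import polyorder polyrcf complex.
Set Implicit Arguments. Unset Strict Implicit. Unset Printing Implicit Defensive.
Import Order.TTheory GRing.Theory Num.Theory.
Local Open Scope ring_scope.

Section CauchyIndex.
Variable R : rcfType.

Definition cofx (x : R) (P : {poly R}) : {poly R} :=
  P %/ ('X - x%:P) ^+ (multiplicity x P).

Definition valx (x : R) (P Q : {poly R}) : int :=
  (multiplicity x P)%:Z - (multiplicity x Q)%:Z.

Definition Indp (x : R) (P Q : {poly R}) : R :=
  if [&& P != 0, Q != 0 & valx x P Q < 0] then
    2^-1 * Num.sg ((cofx x P).[x] * (cofx x Q).[x])
  else 0.

Definition Indm (x : R) (P Q : {poly R}) : R :=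
  if [&& P != 0, Q != 0 & valx x P Q < 0] then
    2^-1 * ((-1) ^ (valx x P Q)) * Num.sg ((cofx x P).[x] * (cofx x Q).[x])
  else 0.

Definition Indx (x : R) (P Q : {poly R}) : R := Indp x P Q - Indm x P Q.

(* For a < b.  The sum over x in (a,b) is taken over the roots of Q in (a,b):
   Ind_x(P,Q) = 0 unless mult_x Q > mult_x P >= 0, i.e. unless Q(x) = 0. *)
Definition Ind_lt (a b : R) (P Q : {poly R}) : R :=
  Indp a P Q + \sum_(x <- roots Q a b) Indx x P Q - Indm b P Q.

Definition Ind (a b : R) (P Q : {poly R}) : R :=
  if a < b then Ind_lt a b P Q
  else if b < a then - Ind_lt b a P Q
  else 0.

(* Bivariate polynomials C[X,Y] are {poly {poly R[i]}}: outer variable Y,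
   inner variable X. *)
Definition bRe (F : {poly {poly R[i]}}) : {poly {poly R}} :=
  map_poly (map_poly (@complex.Re R)) F.
Definition bIm (F : {poly {poly R[i]}}) : {poly {poly R}} :=
  map_poly (map_poly (@complex.Im R)) F.
Definition bconj (F : {poly {poly R[i]}}) : {poly {poly R[i]}} :=
  map_poly (map_poly conjc) F.

Definition evalY (P : {poly {poly R}}) (y : R) : {poly R} := P.[y%:P].
Definition evalX (P : {poly {poly R}}) (x : R) : {poly R} :=
  map_poly (fun q : {poly R} => q.[x]) P.

Definition iC : R[i] := Complex 0 1.

(* C[Z] -> C[X,Y], Z = X + iY *)
Definition embZ (F : {poly R[i]}) : {poly {poly R[i]}} :=
  (map_poly (fun c : R[i] => c%:P%:P) F).[('X)%:P + iC%:P%:P * 'X].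

Definition wind (x0 x1 y0 y1 : R) (F : {poly {poly R[i]}}) : R :=
  2^-1 * ( Ind x0 x1 (evalY (bRe F) y0) (evalY (bIm F) y0)
         + Ind y0 y1 (evalX (bRe F) x1) (evalX (bIm F) x1)
         + Ind x1 x0 (evalY (bRe F) y1) (evalY (bIm F) y1)
         + Ind y1 y0 (evalX (bRe F) x0) (evalX (bIm F) x0) ).

Definition Wind (x0 x1 y0 y1 : R) (F : {poly {poly R[i]}}) : R :=
  2^-1 * (wind x0 x1 y0 y1 F + wind x0 x1 y0 y1 (iC%:P%:P * F)).

(* W(F/G | dGamma) := W(F * \overline G | dGamma) *)
Definition WindQ (x0 x1 y0 y1 : R) (F G : {poly {poly R[i]}}) : R :=
  Wind x0 x1 y0 y1 (F * bconj G).

End CauchyIndex.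

(* Main.v *)
Require Import Defs.
From HB Require Import structures.
From mathcomp Require Import all_boot all_order all_algebra.
From mathcomp Require Import polyorder polyrcf complex qe_rcf_th zify ring.
Import Order.TTheory GRing.Theory Num.Theory Pdiv.Field.
Set Implicit Arguments. Unset Strict Implicit. Unset Printing Implicit Defensive.
Local Open Scope ring_scope.

Section Local.
Variable R : rcfType.
Implicit Types (P Q : {poly R}) (x a b c : R).

Lemma sgp_right_XsubCn x n : sgp_right (('X - x%:P) ^+ n) x = 1.
Proof.
elim: n => [|n IH]; first by rewrite expr0 -polyC1 sgp_rightc sgr1.
rewrite exprS sgp_right_mul IH mulr1 sgp_right_rec.
rewrite polyXsubC_eq0 /= root_XsubC eqxx /= derivXsubC.
by rewrite -polyC1 sgp_rightc sgr1.
Qed.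

Lemma cofx_sg x P : P != 0 -> Num.sg (cofx x P).[x] = sgp_right P x.
Proof.
move=> P0; case: (mu_spec x P0) => q nq hP.
have ->: cofx x P = q.
  by rewrite /cofx {1}hP mulpK // expf_neq0 // polyXsubC_eq0.
by rewrite {1}hP sgp_right_mul sgp_right_XsubCn mulr1 sgp_rightNroot.
Qed.

Lemma valx_lt0 x P Q : (valx x P Q < 0) = (\mu_x P < \mu_x Q)%N.
Proof. by rewrite /valx subr_lt0 ltz_nat. Qed.

Lemma IndpE x P Q : Indp x P Q =
  if [&& P != 0, Q != 0 & (\mu_x P < \mu_x Q)%N]
  then 2^-1 * (sgp_right P x * sgp_right Q x) else 0.
Proof.
rewrite /Indp valx_lt0; case: ifP => // /and3P[P0 Q0 _].
by rewrite sgrM !cofx_sg.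
Qed.

Lemma signz_lt (m n : nat) : (m < n)%N ->
  (-1 : R) ^ (m%:Z - n%:Z) = (-1) ^+ (m + n).
Proof.
move=> lt; have e: m%:Z - n%:Z = - (n - m)%N%:Z.
  lia.

rewrite e -exprnN invr_sign -signr_odd oddB; last exact: ltnW.
by rewrite -[RHS]signr_odd oddD addbC.
Qed.
Lemma IndmE x P Q : Indm x P Q =
  if [&& P != 0, Q != 0 & (\mu_x P < \mu_x Q)%N]
  then 2^-1 * ((-1) ^+ (\mu_x P + \mu_x Q) * (sgp_right P x * sgp_right Q x))
  else 0.
Proof.
rewrite /Indm valx_lt0; case: ifP => // /and3P[P0 Q0 lt].
rewrite sgrM !cofx_sg //.
have h : (-1 : R) ^ (valx x P Q) = (-1) ^+ (\mu_x P + \mu_x Q) by rewrite /valx signz_lt.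
rewrite h.
by rewrite -mulrA.
Qed.

Lemma Indx_jump x P Q : Indx x P Q = (jump P Q x)%:~R.
Proof.
rewrite /Indx IndpE IndmE /jump.
have [->|P0] := eqVneq P 0; first by rewrite /= subrr.
have [->|Q0] := eqVneq Q 0; first by rewrite /= mu0 subrr.
rewrite /=; case: ltnP => lt; last first.
  by rewrite subrr (_ : (_ - _ = 0)%N) ?mulr0n //; apply/eqP; rewrite subn_eq0.
rewrite sgp_right_mul.
have -> : odd (\mu_x Q - \mu_x P) = odd (\mu_x P + \mu_x Q).
  by rewrite oddB ?oddD ?(ltnW lt) // addbC.
rewrite -signr_odd.
have s2 : (sgp_right P x * sgp_right Q x) ^+ 2 = 1.
  by rewrite exprMn !expr2 !sgp_right_square // mulr1.
have := eqxx (1:R); rewrite -{1}s2 sqrf_eq1 => /orP[/eqP hs|/eqP hs].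
all: rewrite hs; case: (odd _); rewrite ?ltr01 ?ltrN10 /= ?expr0 ?expr1 ?mulr1n ?mulr0n.
all: rewrite ?ltr10 ?ltrN10 /= ?expr0 ?expr1; by field.
Qed.

Lemma Ind_ltE a b P Q :
  Ind_lt a b P Q = Indp a P Q + (cindex a b P Q)%:~R - Indm b P Q.
Proof.
rewrite /Ind_lt /cindex rmorph_sum; congr (_ + _ - _).
by apply: eq_bigr => y _; rewrite Indx_jump.
Qed.

Lemma jumpE P Q x : jump P Q x =
  if (P != 0) && (\mu_x P < \mu_x Q)%N
  then (-1) ^+ (sgp_right (P * Q) x < 0)%R *+ odd (\mu_x Q - \mu_x P) else 0.
Proof.
rewrite /jump; have [->|P0] := eqVneq P 0; first by [].
rewrite /=; case: ltnP => // h.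
by rewrite (_ : (_ - _ = 0)%N) ?mulr0n //; apply/eqP; rewrite subn_eq0.
Qed.

Lemma transl_lt x P Q c : P != 0 -> (\mu_x P < \mu_x Q)%N ->
  [/\ P + c *: Q != 0, \mu_x (P + c *: Q) = \mu_x P
    & sgp_right (P + c *: Q) x = sgp_right P x].
Proof.
move=> P0 lt; have [->|c0] := eqVneq c 0.
  by rewrite scale0r addr0.
have Q0 : Q != 0 by apply: contraTneq lt => ->; rewrite mu0.
have cQ0 : c *: Q != 0 by rewrite scaler_eq0 negb_or c0.
have lt' : (\mu_x P < \mu_x (c *: Q))%N by rewrite mu_mulC.
have S0 : P + c *: Q != 0.
  apply: contraTneq lt' => /eqP; rewrite addr_eq0 => /eqP ->.
  by rewrite mu_opp ltnn.
split => //; first by rewrite mu_addr.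
by rewrite addrC sgp_right_addp0.
Qed.

Lemma transl_ge x P Q c : Q != 0 -> ~~ ((P != 0) && (\mu_x P < \mu_x Q)%N) ->
  ~~ ((P + c *: Q != 0) && (\mu_x (P + c *: Q) < \mu_x Q)%N).
Proof.
move=> Q0 h; apply/negP => /andP[S0]; rewrite ltnNge => /negP; apply.
rewrite -root_le_mu //; apply: dvdp_add.
  have [->|P0] := eqVneq P 0; first exact: dvdp0.
  by rewrite root_le_mu //; move: h; rewrite P0 /= -leqNgt.
by rewrite -mul_polyC; apply: dvdp_mull; apply: root_mu.
Qed.

Lemma Indp_transl x P Q c : Indp x (P + c *: Q) Q = Indp x P Q.
Proof.
rewrite !IndpE; have [->|Q0] := eqVneq Q 0; first by rewrite !andbF.
rewrite /=; case h: ((P != 0) && _).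
  by case/andP: h => P0 lt; case: (transl_lt (x:=x) c P0 lt) => -> -> ->; rewrite lt.
by rewrite (negPf (transl_ge (x:=x) c Q0 (negbT h))).
Qed.

Lemma Indm_transl x P Q c : Indm x (P + c *: Q) Q = Indm x P Q.
Proof.
rewrite !IndmE; have [->|Q0] := eqVneq Q 0; first by rewrite !andbF.
rewrite /=; case h: ((P != 0) && _).
  by case/andP: h => P0 lt; case: (transl_lt (x:=x) c P0 lt) => -> -> ->; rewrite lt.
by rewrite (negPf (transl_ge (x:=x) c Q0 (negbT h))).
Qed.

Lemma jump_transl x P Q c : jump (P + c *: Q) Q x = jump P Q x.
Proof.
rewrite !jumpE; have [->|Q0] := eqVneq Q 0; first by rewrite mu0 !ltn0 !andbF.
case h: ((P != 0) && _).
  case/andP: h => P0 lt; case: (transl_lt (x:=x) c P0 lt) => -> -> h3.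
  by rewrite lt /= !sgp_right_mul h3.
by rewrite (negPf (transl_ge (x:=x) c Q0 (negbT h))).
Qed.

Lemma Ind_transl a b P Q c : Ind_lt a b (P + c *: Q) Q = Ind_lt a b P Q.
Proof.
rewrite !Ind_ltE Indp_transl Indm_transl /cindex.
by congr (_ + _%:~R - _); apply: eq_bigr => y _; rewrite jump_transl.
Qed.

Lemma Indp_scalel x P Q c : Indp x (c *: P) Q = Num.sg c * Indp x P Q.
Proof.
have [->|c0] := eqVneq c 0; first by rewrite scale0r sgr0 mul0r IndpE eqxx.
rewrite !IndpE scaler_eq0 (negPf c0) /= mu_mulC //.
by case: ifP => _; rewrite ?mulr0 // sgp_right_scale; field.
Qed.

Lemma Indp_scaler x P Q c : Indp x P (c *: Q) = Num.sg c * Indp x P Q.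
Proof.
have [->|c0] := eqVneq c 0; first by rewrite scale0r sgr0 mul0r IndpE eqxx andbF.
rewrite !IndpE scaler_eq0 (negPf c0) /= mu_mulC //.
by case: ifP => _; rewrite ?mulr0 // sgp_right_scale; field.
Qed.

Lemma Indm_scalel x P Q c : Indm x (c *: P) Q = Num.sg c * Indm x P Q.
Proof.
have [->|c0] := eqVneq c 0; first by rewrite scale0r sgr0 mul0r IndmE eqxx.
rewrite !IndmE scaler_eq0 (negPf c0) /= mu_mulC //.
by case: ifP => _; rewrite ?mulr0 // sgp_right_scale; field.
Qed.

Lemma Indm_scaler x P Q c : Indm x P (c *: Q) = Num.sg c * Indm x P Q.
Proof.
have [->|c0] := eqVneq c 0; first by rewrite scale0r sgr0 mul0r IndmE eqxx andbF.
rewrite !IndmE scaler_eq0 (negPf c0) /= mu_mulC //.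
by case: ifP => _; rewrite ?mulr0 // sgp_right_scale; field.
Qed.

Lemma Ind_scalel a b P Q c : Ind_lt a b (c *: P) Q = Num.sg c * Ind_lt a b P Q.
Proof.
rewrite !Ind_ltE Indp_scalel Indm_scalel cindex_mulCp rmorphM /= -sgrEz.
by rewrite mulrBr mulrDr.
Qed.

Lemma Ind_scaler a b P Q c : Ind_lt a b P (c *: Q) = Num.sg c * Ind_lt a b P Q.
Proof.
rewrite !Ind_ltE Indp_scaler Indm_scaler cindex_pmulC rmorphM /= -sgrEz.
by rewrite mulrBr mulrDr.
Qed.

Definition sig x P Q : R :=
  if [&& P != 0, Q != 0 & \mu_x P == \mu_x Q]
  then sgp_right P x * sgp_right Q x else 0.

Lemma a_part a P Q : P != 0 -> Q != 0 ->
  Indp a P Q + Indp a Q P = 2^-1 * (sgp_right P a * sgp_right Q a - sig a P Q).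
Proof.
move=> P0 Q0; rewrite !IndpE /sig P0 Q0 /=.
case: ltngtP => h /=; rewrite ?addr0 ?add0r ?subr0.
all: by field.
Qed.

Lemma b_part b P Q : P != 0 -> Q != 0 ->
  Indm b P Q + Indm b Q P =
  2^-1 * ((-1) ^+ (\mu_b P + \mu_b Q) * (sgp_right P b * sgp_right Q b) - sig b P Q).
Proof.
move=> P0 Q0; rewrite !IndmE /sig P0 Q0 /=.
case: ltngtP => h /=; rewrite ?addr0 ?add0r ?subr0.
- by field.
- by rewrite addnC; field.
- by rewrite h addnn -signr_odd odd_double expr0 mul1r; field.
Qed.

Lemma Ind_lt0l a b Q : Ind_lt a b 0 Q = 0.
Proof. by rewrite Ind_ltE IndpE IndmE eqxx /= cindex0p ?mulr0z add0r subr0. Qed.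

Lemma Ind_lt0r a b P : Ind_lt a b P 0 = 0.
Proof.
by rewrite Ind_ltE IndpE IndmE eqxx andbF /cindex roots0 big_nil ?mulr0z add0r subr0.
Qed.

Lemma variationE u v : u != 0 -> v != 0 ->
  (variation u v)%:~R = 2^-1 * (Num.sg v - Num.sg u) :> R.
Proof.
move=> u0 v0; rewrite /variation.
case: (ltgtP u 0) u0 => // hu _; case: (ltgtP v 0) v0 => // hv _.
- have -> : (u * v < 0) = false by rewrite ltNge ltW // nmulr_rgt0.
  rewrite (ltr0_sg hu) (ltr0_sg hv) /= mulr0 subrr mulr0 //.
- have -> : (u * v < 0) = true by rewrite nmulr_rlt0.
  rewrite (ltr0_sg hu) (gtr0_sg hv) gtr0_sgz //= mulr1; by field.
- have -> : (u * v < 0) = true by rewrite pmulr_rlt0.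
  rewrite (gtr0_sg hu) (ltr0_sg hv) ltr0_sgz //= mulr1; by field.
- have -> : (u * v < 0) = false by rewrite pmulr_rlt0 // ltNge ltW.
  rewrite (gtr0_sg hu) (gtr0_sg hv) /= mulr0 subrr mulr0 //.
Qed.

Lemma roots_sub a b a' b' S Y : Y != 0 -> (forall x, root Y x -> root S x) ->
  a <= a' -> b' <= b -> {in `]a, a'], forall x, ~~ root S x} ->
  {in `[b', b[, forall x, ~~ root S x} -> roots Y a b = roots Y a' b'.
Proof.
move=> Y0 YS aa' bb' na nb; apply: roots_uniq => //; last exact: sorted_roots.
move=> x; rewrite -(@roots_on_roots _ Y a b Y0 x).
case rY: (root Y x); rewrite ?andbF ?andbT //.
have rS := YS _ rY; rewrite !in_itv /=.
apply/andP/andP => [[h1 h2]|[h1 h2]].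
  by split; [apply: le_lt_trans h1 | apply: lt_le_trans bb'].
split; rewrite ltNge; apply/negP => h.
  by move: (na x); rewrite in_itv /= h1 h rS => /(_ isT).
by move: (nb x); rewrite in_itv /= h2 h rS => /(_ isT).
Qed.

Lemma Ind_inv a b P Q : a < b ->
  Ind_lt a b P Q + Ind_lt a b Q P = 2^-1 * (sig b P Q - sig a P Q).
Proof.
move=> ab.
have [->|P0] := eqVneq P 0; first by rewrite Ind_lt0l Ind_lt0r /sig eqxx /= subrr mulr0 addr0.
have [->|Q0] := eqVneq Q 0; first by rewrite Ind_lt0l Ind_lt0r /sig eqxx andbF /= subrr mulr0 addr0.
have PQ0 : P * Q != 0 by rewrite mulf_neq0.
case: (neighpr_wit ab PQ0) => a' ha'.
have hnr : next_root (P * Q) a b <= b.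
  by have := next_root_in (P * Q) a b; rewrite in_itv /= (max_l (ltW ab)) => /andP[_ ->].
have aa' : a < a' by move: ha'; rewrite /neighpr in_itv /= => /andP[].
have a'n : a' < next_root (P * Q) a b by move: ha'; rewrite /neighpr in_itv /= => /andP[].
have a'b : a' < b by apply: lt_le_trans hnr.
case: (neighpl_wit a'b PQ0) => b' hb'.
have hpr : a' <= prev_root (P * Q) a' b.
  by have := prev_root_in (P * Q) a' b; rewrite in_itv /= (min_l (ltW a'b)) => /andP[-> _].
have pb' : prev_root (P * Q) a' b < b' by move: hb'; rewrite /neighpl in_itv /= => /andP[].
have b'b : b' < b by move: hb'; rewrite /neighpl in_itv /= => /andP[].
have a'b' : a' < b' by apply: le_lt_trans pb'.
have na : {in `]a, a'], forall x, ~~ root (P * Q) x}.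
  move=> x; rewrite in_itv /= => /andP[h1 h2]; apply: (@next_noroot R (P * Q) a b).
  by rewrite in_itv /= h1 (le_lt_trans h2 a'n).
have nb : {in `[b', b[, forall x, ~~ root (P * Q) x}.
  move=> x; rewrite in_itv /= => /andP[h1 h2]; apply: (@prev_noroot R (P * Q) a' b).
  by rewrite in_itv /= h2 (lt_le_trans pb' h1).
have rP : roots P a b = roots P a' b'.
  apply: (roots_sub P0 _ (ltW aa') (ltW b'b) na nb).
  by move=> x rx; rewrite rootM rx.
have rQ : roots Q a b = roots Q a' b'.
  apply: (roots_sub Q0 _ (ltW aa') (ltW b'b) na nb).
  by move=> x rx; rewrite rootM rx orbT.
have ra' : ~~ root (P * Q) a' by apply: na; rewrite in_itv /= aa' lexx.
have rb' : ~~ root (P * Q) b' by apply: nb; rewrite in_itv /= b'b lexx.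
have ci := cindex_inv a'b' ra' rb'.
have e1 : cindex a b P Q = cindex a' b' P Q by rewrite /cindex rQ.
have e2 : cindex a b Q P = cindex a' b' Q P by rewrite /cindex rP.
have sa' := sgr_neighpr ha'.
have sb' := sgr_neighpl hb'.
have -> : Ind_lt a b P Q + Ind_lt a b Q P =
  (Indp a P Q + Indp a Q P) + (cindex a' b' Q P + cindex a' b' P Q)%:~R
   - (Indm b P Q + Indm b Q P).
  by rewrite !Ind_ltE e1 e2 rmorphD /=; ring.
rewrite ci /cross variationE ?sa' ?sb' -?rootE //.
rewrite a_part // b_part // !sgp_right_mul mu_mul // signr_odd.
by field.
Qed.

Lemma Ind_rot l r P Q P' Q' u v : v != 0 ->
  P' = u *: P - v *: Q -> Q' = v *: P + u *: Q -> l < r ->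
  Ind_lt l r P' Q' = Ind_lt l r P Q - Num.sg v * (2^-1 * (sig r Q Q' - sig l Q Q')).
Proof.
move=> v0 eP eQ lr.
have eP2 : P' = (- ((u ^+ 2 + v ^+ 2) / v)) *: Q + (u / v) *: Q'.
  rewrite eP eQ; apply/polyP => i.
  rewrite !(coefD, coefB, coefZ, coefN); by field.
have hQ' : Ind_lt l r Q' Q = Num.sg v * Ind_lt l r P Q.
  by rewrite eQ Ind_transl Ind_scalel.
have inv := Ind_inv Q Q' lr.
have sk : Num.sg (- ((u ^+ 2 + v ^+ 2) / v)) = - Num.sg v.
  rewrite sgrN sgrM sgrV (gtr0_sg (_ : 0 < u ^+ 2 + v ^+ 2)) ?mul1r //.
  by apply: ltr_wpDl; rewrite ?sqr_ge0 // exprn_even_gt0.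
have sv : Num.sg v * Num.sg v = 1 by rewrite -expr2 sqr_sg v0.
rewrite eP2 Ind_transl Ind_scalel sk.
have -> : Ind_lt l r Q Q' = 2^-1 * (sig r Q Q' - sig l Q Q') - Num.sg v * Ind_lt l r P Q.
  by rewrite -hQ' -inv; ring.
rewrite (_ : forall s A I : R, - s * (A - s * I) = - (s * A) + (s * s) * I);
  last by move=> *; ring.
rewrite sv; ring.
Qed.

End Local.

Section Cx.
Variable R : rcfType.
Local Notation C := (R[i]).

Definition ReP (h : {poly C}) : {poly R} := map_poly (@complex.Re R) h.
Definition ImP (h : {poly C}) : {poly R} := map_poly (@complex.Im R) h.

Lemma ReP_scale (g : C) h : ReP (g *: h) = complex.Re g *: ReP h - complex.Im g *: ImP h.
Proof.
apply/polyP => i; rewrite coefB !coefZ !coef_map_id0 // coefZ.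
by case: g => g1 g2; case: (h`_i) => h1 h2.
Qed.

Lemma ImP_scale (g : C) h : ImP (g *: h) = complex.Im g *: ReP h + complex.Re g *: ImP h.
Proof.
apply/polyP => i; rewrite coefD !coefZ !coef_map_id0 // coefZ.
by case: g => g1 g2; case: (h`_i) => h1 h2 /=; rewrite addrC.
Qed.

Local Notation i := (iC R).

Lemma ReP_i h : ReP (i *: h) = - ImP h.
Proof. by rewrite ReP_scale /= scale0r scale1r sub0r. Qed.

Lemma ImP_i h : ImP (i *: h) = ReP h.
Proof. by rewrite ImP_scale /= scale0r scale1r addr0. Qed.

Definition E l r h := Ind_lt l r (ReP h) (ImP h) + Ind_lt l r (ReP (i *: h)) (ImP (i *: h)).
Definition D (g : C) h x := sig x (ImP h) (ImP (g *: h)) + sig x (ReP h) (ReP (g *: h)).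

Lemma E_rot l r g h : complex.Im g != 0 -> l < r ->
  E l r (g *: h) = E l r h - Num.sg (complex.Im g) * (2^-1 * (D g h r - D g h l)).
Proof.
move=> v0 lr; rewrite /E /D.
rewrite (Ind_rot v0 (ReP_scale g h) (ImP_scale g h) lr).
have -> : i *: (g *: h) = g *: (i *: h) by rewrite !scalerA mulrC.
rewrite (Ind_rot v0 (ReP_scale g (i *: h)) (ImP_scale g (i *: h)) lr).
have -> : g *: (i *: h) = i *: (g *: h) by rewrite !scalerA mulrC.
rewrite !ImP_i; ring.
Qed.

Lemma Ind_real l r g h : complex.Im g = 0 -> g != 0 ->
  Ind_lt l r (ReP (g *: h)) (ImP (g *: h)) = Ind_lt l r (ReP h) (ImP h).
Proof.
move=> g2 g0; rewrite ReP_scale ImP_scale g2 !scale0r subr0 add0r.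
have u0 : complex.Re g != 0.
  by move: g0 g2; case: g => a b /= g0 g2; apply: contraNneq g0 => a0; rewrite a0 g2.
rewrite Ind_scalel Ind_scaler mulrA -expr2 sqr_sg u0 mul1r //.
Qed.

Lemma E_real l r g h : complex.Im g = 0 -> g != 0 -> E l r (g *: h) = E l r h.
Proof.
move=> g2 g0; rewrite /E Ind_real //.
have -> : i *: (g *: h) = g *: (i *: h) by rewrite !scalerA mulrC.
by rewrite Ind_real.
Qed.

End Cx.

Section Germ.
Variable R : rcfType.
Local Notation C := (R[i]).
Local Notation i := (iC R).
Local Notation rc := (real_complex R).

Lemma sig_germ t k (A B : {poly R}) : (A.[t] != 0) || (B.[t] != 0) ->
  sig t (('X - t%:P) ^+ k * A) (('X - t%:P) ^+ k * B) = Num.sg A.[t] * Num.sg B.[t].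
Proof.
move=> h.
have Wn : ('X - t%:P) ^+ k != 0 by rewrite expf_neq0 // polyXsubC_eq0.
have muW (w : {poly R}) : w != 0 -> \mu_t (('X - t%:P) ^+ k * w) = (k + \mu_t w)%N.
  by move=> w0; rewrite mu_mul ?mulf_neq0 // mu_exp mu_XsubC mul1n.
have sW (w : {poly R}) : sgp_right (('X - t%:P) ^+ k * w) t = sgp_right w t.
  by rewrite sgp_right_mul sgp_right_XsubCn mul1r.
have nz (w : {poly R}) : w.[t] != 0 -> w != 0.
  by apply: contraNneq => ->; rewrite horner0.
rewrite /sig !sW.
case: (eqVneq A.[t] 0) => At; case: (eqVneq B.[t] 0) => Bt.
- by move: h; rewrite At Bt eqxx.
- rewrite At sgr0 mul0r; have B0 := nz _ Bt.
  have [->|A0] := eqVneq A 0; first by rewrite mulr0 eqxx.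
  rewrite !mulf_neq0 //= !muW // (muNroot (_ : ~~ root B t)) ?rootE //.
  have mA : (0 < \mu_t A)%N by rewrite mu_gt0 // rootE At.
  by rewrite eqn_add2l eqn0Ngt mA.
- rewrite Bt sgr0 mulr0; have A0 := nz _ At.
  have [->|B0] := eqVneq B 0; first by rewrite mulr0 eqxx andbF.
  rewrite !mulf_neq0 //= !muW // (muNroot (_ : ~~ root A t)) ?rootE //.
  have mB : (0 < \mu_t B)%N by rewrite mu_gt0 // rootE Bt.
  by rewrite eqn_add2l eq_sym eqn0Ngt mB.
- have A0 := nz _ At; have B0 := nz _ Bt.
  rewrite !mulf_neq0 //= !muW // !muNroot ?rootE // eqxx.
  by rewrite !sgp_rightNroot ?rootE.
Qed.

Section GenF.
Variable f : {additive C -> R}.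
Hypothesis fs : forall (c : R) (z : C), f (rc c * z) = c * f z.

Lemma mapf_mul (w : {poly R}) (g : {poly C}) :
  map_poly f (map_poly rc w * g) = w * map_poly f g.
Proof.
apply/polyP => j; rewrite coef_map_id0 ?raddf0 // !coefM raddf_sum.
apply: eq_bigr => l _; rewrite coef_map_id0 ?raddf0 // coef_map_id0 ?raddf0 //.
Qed.

Lemma mapf_horner (g : {poly C}) (t : R) : (map_poly f g).[t] = f g.[rc t].
Proof.
elim/poly_ind: g => [|g c IH]; first by rewrite map_poly0 !horner0 raddf0.
rewrite raddfD /= map_polyC.
have -> : map_poly f (g * 'X) = map_poly f g * 'X.
  by rewrite mulrC; have := mapf_mul 'X g; rewrite map_polyX => ->; rewrite mulrC.
rewrite !hornerD !hornerMX !hornerC raddfD /= IH; congr (_ + _).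
by rewrite [in RHS]mulrC fs mulrC.
Qed.

End GenF.

Lemma Re_rc c z : complex.Re (rc c * z) = c * complex.Re z.
Proof. by case: z => a b /=; rewrite mul0r subr0. Qed.

Lemma Im_rc c z : complex.Im (rc c * z) = c * complex.Im z.
Proof. by case: z => a b /=; rewrite mul0r addr0. Qed.

Lemma ReP_mul (w : {poly R}) (g : {poly C}) : ReP (map_poly rc w * g) = w * ReP g.
Proof. exact: (mapf_mul (f := @complex.Re R) Re_rc). Qed.
Lemma ImP_mul (w : {poly R}) (g : {poly C}) : ImP (map_poly rc w * g) = w * ImP g.
Proof. exact: (mapf_mul (f := @complex.Im R) Im_rc). Qed.
Lemma ReP_horner (g : {poly C}) t : (ReP g).[t] = complex.Re g.[rc t].
Proof. exact: (mapf_horner (f := @complex.Re R) Re_rc). Qed.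
Lemma ImP_horner (g : {poly C}) t : (ImP g).[t] = complex.Im g.[rc t].
Proof. exact: (mapf_horner (f := @complex.Im R) Im_rc). Qed.

Definition T (g b : C) : R :=
  Num.sg (complex.Im b) * Num.sg (complex.Im (g * b)) +
  Num.sg (complex.Re b) * Num.sg (complex.Re (g * b)).

Lemma nzIm (g b : C) : complex.Im g != 0 -> b != 0 ->
  (complex.Im b != 0) || (complex.Im (g * b) != 0).
Proof.
case: g => g1 g2; case: b => b1 b2 /= g2n bn.
rewrite -negb_and; apply/negP => /andP[/eqP e2 /eqP e].
move: e; rewrite e2 mulr0 add0r => /eqP; rewrite mulf_eq0 (negPf g2n) /= => /eqP e1.
by move: bn; rewrite e1 e2 eqxx.
Qed.

Lemma nzRe (g b : C) : complex.Im g != 0 -> b != 0 ->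
  (complex.Re b != 0) || (complex.Re (g * b) != 0).
Proof.
case: g => g1 g2; case: b => b1 b2 /= g2n bn.
rewrite -negb_and; apply/negP => /andP[/eqP e1 /eqP e].
move: e; rewrite e1 mulr0 sub0r => /eqP; rewrite oppr_eq0 mulf_eq0 (negPf g2n) /= => /eqP e2.
by move: bn; rewrite e1 e2 eqxx.
Qed.

Lemma D_germ (g : C) (h w : {poly C}) (t : R) k : complex.Im g != 0 ->
  w.[rc t] != 0 -> h = ('X - (rc t)%:P) ^+ k * w -> D g h t = T g w.[rc t].
Proof.
move=> g0 w0 ->.
have eW : ('X - (rc t)%:P) ^+ k = map_poly rc (('X - t%:P) ^+ k).
  by rewrite rmorphXn rmorphB /= map_polyX map_polyC.
rewrite /D /T scalerAr eW !ReP_mul !ImP_mul.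
rewrite !sig_germ ?ReP_horner ?ImP_horner ?hornerZ //.
  exact: nzRe.
exact: nzIm.
Qed.

Lemma Re_i z : complex.Re (i * z) = - complex.Im z.
Proof. by case: z => a b /=; rewrite !mul0r mul1r sub0r. Qed.
Lemma Im_i z : complex.Im (i * z) = complex.Re z.
Proof. by case: z => a b /=; rewrite !mul0r mul1r add0r. Qed.

Lemma T_i g b : T g (i * b) = T g b.
Proof.
rewrite /T mulrCA !Re_i !Im_i !sgrN mulrNN addrC //.
Qed.

Lemma T_N g b : T g (- b) = T g b.
Proof. by rewrite /T mulrN !raddfN /= !sgrN !mulrNN. Qed.

Lemma T_pow g b m n : T g (i ^+ m * (conjc i) ^+ n * b) = T g b.
Proof.
have ci : conjc i = - i by rewrite /iC /=; apply/eqP; rewrite eq_complex /= ?oppr0 ?eqxx.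
elim: m => [|m IH].
  rewrite expr0 mul1r ci; elim: n => [|n IH]; first by rewrite expr0 mul1r.
  by rewrite exprS !mulNr T_N -mulrA T_i.
by rewrite exprS -!mulrA T_i mulrA IH.
Qed.

End Germ.

Section Rest.
Variable R : rcfType.
Local Notation C := (R[i]).
Local Notation i := (iC R).
Local Notation rc := (real_complex R).

Definition restH (B : {poly {poly C}}) (y : R) : {poly C} := B.[(rc y)%:P].
Definition restV (B : {poly {poly C}}) (x : R) : {poly C} :=
  map_poly (horner_eval (rc x)) B.

Lemma size_map_le (aR rR : nzSemiRingType) (g : aR -> rR) (p : {poly aR}) :
  (size (map_poly g p) <= size p)%N.
Proof. by rewrite /map_poly; exact: size_poly. Qed.

Section GenF2.
Variable f : {additive C -> R}.
Hypothesis fs : forall (c : R) (z : C), f (rc c * z) = c * f z.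

Lemma mapf_evalY B y :
  (map_poly (map_poly f) B).[y%:P] = map_poly f (B.[(rc y)%:P]).
Proof.
rewrite (horner_coef_wide _ (size_map_le _ _)) horner_coef raddf_sum /=.
apply: eq_bigr => j _; rewrite coef_map_id0 ?map_poly0 //.
have -> : ((rc y)%:P) ^+ j = map_poly rc (y%:P ^+ j).
  by rewrite rmorphXn /= map_polyC.
rewrite [in RHS]mulrC (mapf_mul fs) mulrC //.
Qed.

Lemma mapf_evalX B x :
  map_poly (fun q => q.[x]) (map_poly (map_poly f) B) = map_poly f (restV B x).
Proof.
apply/polyP => j; rewrite !coef_map_id0 ?map_poly0 ?horner0 ?raddf0 //.
by rewrite (mapf_horner fs) horner_evalE.
Qed.

End GenF2.

Lemma evalY_Re B y : evalY (bRe B) y = ReP (restH B y).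
Proof. exact: (mapf_evalY (f := @complex.Re R) (@Re_rc R)). Qed.
Lemma evalY_Im B y : evalY (bIm B) y = ImP (restH B y).
Proof. exact: (mapf_evalY (f := @complex.Im R) (@Im_rc R)). Qed.
Lemma evalX_Re B x : evalX (bRe B) x = ReP (restV B x).
Proof. exact: (mapf_evalX (f := @complex.Re R) (@Re_rc R)). Qed.
Lemma evalX_Im B x : evalX (bIm B) x = ImP (restV B x).
Proof. exact: (mapf_evalX (f := @complex.Im R) (@Im_rc R)). Qed.

Lemma restH_mul B1 B2 y : restH (B1 * B2) y = restH B1 y * restH B2 y.
Proof. by rewrite /restH hornerM. Qed.
Lemma restV_mul B1 B2 x : restV (B1 * B2) x = restV B1 x * restV B2 x.
Proof. by rewrite /restV rmorphM. Qed.

Lemma restH_i B y : restH (i%:P%:P * B) y = i *: restH B y.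
Proof. by rewrite /restH hornerM hornerC mul_polyC. Qed.
Lemma restV_i B x : restV (i%:P%:P * B) x = i *: restV B x.
Proof. by rewrite /restV rmorphM /= map_polyC /= horner_evalE hornerC mul_polyC. Qed.

Lemma restH_conj B y : restH (bconj B) y = map_poly conjc (restH B y).
Proof.
rewrite /restH /bconj -horner_map /= map_polyC /=; congr (_.[_]); congr (_%:P).
apply/eqP; rewrite eq_complex /= oppr0 !eqxx //.
Qed.

Lemma restV_conj B x : restV (bconj B) x = map_poly conjc (restV B x).
Proof.
apply/polyP => j; rewrite /restV /bconj !coef_map_id0 ?map_poly0 ?horner0 ?raddf0 ?horner_evalE //.
by rewrite -[in LHS](conjc_real x) horner_map.
Qed.

Lemma restH_embZ F y : restH (embZ F) y = F \Po ('X + (i * rc y)%:P).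
Proof.
rewrite /restH /embZ /comp_poly.
rewrite -[LHS]horner_evalE -horner_map /=.
rewrite -map_poly_comp.
congr (_.[_]).
  by apply: eq_map_poly => c /=; rewrite horner_evalE hornerC.
by rewrite horner_evalE hornerD hornerC hornerMX hornerC polyCM.
Qed.

Lemma restV_embZ F x : restV (embZ F) x = F \Po ((rc x)%:P + i *: 'X).
Proof.
rewrite /restV /embZ /comp_poly -horner_map /=.
rewrite -map_poly_comp.
congr (_.[_]).
  by apply: eq_map_poly => c /=; rewrite map_polyC /= horner_evalE hornerC.
rewrite rmorphD rmorphM /= !map_polyC /= !horner_evalE !hornerC map_polyX.
by rewrite mul_polyC hornerX.
Qed.

End Rest.

Section Corner.
Variable R : rcfType.
Local Notation C := (R[i]).
Local Notation i := (iC R).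
Local Notation rc := (real_complex R).

Lemma conj_rc (t : R) : conjc (rc t) = rc t.
Proof. by apply/eqP; rewrite eq_complex /= oppr0 !eqxx. Qed.

Lemma conj_horner (p : {poly C}) (t : R) : (map_poly conjc p).[rc t] = conjc p.[rc t].
Proof. by rewrite -[in LHS]conj_rc horner_map. Qed.

Lemma map_conj_XsubC (t : R) : map_poly conjc ('X - (rc t)%:P) = 'X - (rc t)%:P.
Proof.
rewrite rmorphB /= map_polyX map_polyC /=; congr (_ - _%:P).
by apply/eqP; rewrite eq_complex /= oppr0 !eqxx.
Qed.

Lemma i_neq0 : i != 0.
Proof. by apply/eqP; case; apply/eqP; rewrite oner_eq0. Qed.

Lemma corner (F G : {poly C}) (g : C) (x y : R) : F != 0 -> G != 0 ->
  complex.Im g != 0 ->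
  D g (restH (embZ F * bconj (embZ G)) y) x =
  D g (restV (embZ F * bconj (embZ G)) x) y.
Proof.
move=> F0 G0 g0.
rewrite restH_mul restH_conj restH_embZ restV_mul restV_conj !restV_embZ restH_embZ.
set z := rc x + i * rc y.
case: (mu_spec z F0) => F1 nF1 eF.
case: (mu_spec z G0) => G1 nG1 eG.
set m := \mu_z F in eF; set n := \mu_z G in eG.
set qH := 'X + (i * rc y)%:P.
set qV := (rc x)%:P + i *: 'X.
have hH : ('X - z%:P) \Po qH = 'X - (rc x)%:P.
  by rewrite comp_polyB comp_polyX comp_polyC /qH /z polyCD; ring.
have hV : ('X - z%:P) \Po qV = i *: ('X - (rc y)%:P).
  rewrite comp_polyB comp_polyX comp_polyC /qV /z polyCD polyCM -!mul_polyC; ring.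
pose wH := (F1 \Po qH) * map_poly conjc (G1 \Po qH).
pose wV := (i ^+ m * (conjc i) ^+ n) *: ((F1 \Po qV) * map_poly conjc (G1 \Po qV)).
have eH : (F \Po qH) * map_poly conjc (G \Po qH) = ('X - (rc x)%:P) ^+ (m + n) * wH.
  rewrite eF eG !comp_polyM !rmorphXn /= hH !rmorphM !rmorphXn /= map_conj_XsubC.
  by rewrite /wH exprD mulrACA mulrC.
have eV : (F \Po qV) * map_poly conjc (G \Po qV) = ('X - (rc y)%:P) ^+ (m + n) * wV.
  rewrite eF eG !comp_polyM !rmorphXn /= hV !rmorphM !rmorphXn /= map_polyZ /=.
  rewrite map_conj_XsubC /wV !exprZn exprD.
  move: (F1 \Po qV) (map_poly conjc (G1 \Po qV)) ('X - (rc y)%:P) => A B Y.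
  rewrite -!(scalerAr, scalerAl) scalerA; congr (_ *: _).
  by rewrite mulrACA mulrC.
have zH : qH.[rc x] = z by rewrite /qH hornerD hornerX hornerC.
have zV : qV.[rc y] = z by rewrite /qV hornerD hornerC hornerZ hornerX.
have nb : F1.[z] * conjc G1.[z] != 0.
  by rewrite mulf_neq0 // ?conjc_eq0 -rootE.
rewrite (D_germ g0 _ eH) ?(D_germ g0 _ eV).
- rewrite /wH /wV hornerZ !hornerM !conj_horner !horner_comp zH zV.
  by rewrite T_pow.
- rewrite /wV hornerZ !hornerM !conj_horner !horner_comp zV.
  by rewrite mulf_neq0 // mulf_neq0 // expf_neq0 // ?conjc_eq0 i_neq0.
- by rewrite /wH !hornerM !conj_horner !horner_comp zH.
Qed.

End Corner.

Section Main.
Variable R : rcfType.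

Lemma Ind_lt_pos (a b : R) P Q : a < b -> Ind a b P Q = Ind_lt a b P Q.
Proof. by move=> ab; rewrite /Ind ab. Qed.

Lemma Ind_lt_neg (a b : R) P Q : a < b -> Ind b a P Q = - Ind_lt a b P Q.
Proof. by move=> ab; rewrite /Ind (lt_gtF ab) ab. Qed.

Lemma arithW (a b c d e f g h : R) :
  2^-1 * (2^-1 * (a + b - c - d) + 2^-1 * (e + f - g - h)) =
  2^-1 * (2^-1 * (a + e + (b + f) - (c + g) - (d + h))).
Proof. ring. Qed.

Lemma arithM (E1 E2 E3 E4 s p q r u : R) :
  2^-1 * (2^-1 * (E1 + E2 - E3 - E4)) =
  2^-1 * (2^-1 * ((E1 - s * (2^-1 * (q - p))) + (E2 - s * (2^-1 * (r - q)))
     - (E3 - s * (2^-1 * (r - u))) - (E4 - s * (2^-1 * (u - p))))).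
Proof. ring. Qed.

Lemma Wind_E (x0 x1 y0 y1 : R) B : x0 < x1 -> y0 < y1 ->
  Wind x0 x1 y0 y1 B = 2^-1 * (2^-1 * (E x0 x1 (restH B y0) + E y0 y1 (restV B x1)
     - E x0 x1 (restH B y1) - E y0 y1 (restV B x0))).
Proof.
move=> hx hy; rewrite /Wind /wind !evalY_Re !evalY_Im !evalX_Re !evalX_Im !restH_i !restV_i.
rewrite !(Ind_lt_pos _ _ hx) !(Ind_lt_pos _ _ hy) !(Ind_lt_neg _ _ hx) !(Ind_lt_neg _ _ hy) /E.
exact: arithW.
Qed.

End Main.

Theorem lemma3p7 (R : rcfType) (F G : {poly R[i]}) (gamma : R[i])
  (x0 x1 y0 y1 : R) :
  F != 0 -> G != 0 -> gamma != 0 -> x0 < x1 -> y0 < y1 ->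
  WindQ x0 x1 y0 y1 (embZ F) (embZ G) =
  WindQ x0 x1 y0 y1 (embZ (gamma *: F)) (embZ G).
Proof.
move=> F0 G0 g0 hx hy.
rewrite /WindQ.
rewrite (Wind_E (embZ F * bconj (embZ G)) hx hy).
rewrite (Wind_E (embZ (gamma *: F) * bconj (embZ G)) hx hy).
have eH y : restH (embZ (gamma *: F) * bconj (embZ G)) y =
    gamma *: restH (embZ F * bconj (embZ G)) y.
  by rewrite !restH_mul !restH_embZ comp_polyZ scalerAl.
have eV x : restV (embZ (gamma *: F) * bconj (embZ G)) x =
    gamma *: restV (embZ F * bconj (embZ G)) x.
  by rewrite !restV_mul !restV_embZ comp_polyZ scalerAl.
rewrite !eH !eV.
have [g2|g2] := eqVneq (complex.Im gamma) 0.
  by rewrite !E_real.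
rewrite !E_rot //.
rewrite (corner x1 y0 F0 G0 g2) (corner x0 y0 F0 G0 g2).
rewrite (corner x1 y1 F0 G0 g2) (corner x0 y1 F0 G0 g2).
exact: arithM.
Qed.
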